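(* Let $u^1,\dots,u^M$ be coherent utilities on $L^0$ with determining sets $\mathcal{D}^1,\dots,\mathcal{D}^M$, and $\rho^m=-u^m$. Let $X=(X^1,\dots,X^d)$ with $X^i\in\bigcap_mL^1_w(\mathcal{D}^m)$, and assume $u^m(\langle h,X\rangle)<0$ for all $h\in\mathbb{R}^d\setminus\{0\}$ and all $m$. Let $E\in\mathbb{R}^d\setminus\{0\}$ and $c^1,\dots,c^M\in(0,\infty)$. Set $G^m=\mathrm{cl}\{\mathsf{E}_\mathsf{Q}X:\mathsf{Q}\in\mathcal{D}^m\}\subseteq\mathbb{R}^d$ and $G=\mathrm{conv}\{G^m/c^m:m=1,\dots,M\}$ (a convex compact set containing $0$ in its interior). Let $T$ be the point of the boundary of $G$ on the ray $\{-tE:t>0\}$, and let $N$ be the set of inner normals to $G$ at $T$, i.e. $N=\{h\in\mathbb{R}^d:\langle h,x\rangle\ge\langle h,T\rangle\ \forall x\in G\}$. Then the set of solutions of the problem $$\langle h,E\rangle\to\max\quad\text{over }h\in\mathbb{R}^d\text{ subject to }\rho^m(\langle h,X\rangle)\le c^m,\ m=1,\dots,M,$$ is $\{h\in N:\langle h,T\rangle=-1\}$, and the maximal value of $\langle h,E\rangle$ is $|E|/|T|$.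
   Context: Let $(\Omega,\mathcal{F},\mathsf{P})$ be a probability space, $L^0$ the space of all real random variables, and $\mathcal{P}$ the set of probability measures on $\mathcal{F}$ absolutely continuous with respect to $\mathsf{P}$. For $\mathsf{Q}\in\mathcal{P}$ and $X\in L^0$, $\mathsf{E}_\mathsf{Q}X:=\mathsf{E}_\mathsf{Q}X^+-\mathsf{E}_\mathsf{Q}X^-$ with the convention $\infty-\infty=-\infty$ (for a vector $X$, $\mathsf{E}_\mathsf{Q}X$ is taken componentwise). A coherent utility on $L^0$ is a map $u:L^0\to[-\infty,\infty]$ of the form $u(X)=\inf_{\mathsf{Q}\in\mathcal{D}}\mathsf{E}_\mathsf{Q}X$ for a nonempty $\mathcal{D}\subseteq\mathcal{P}$; its determining set is the largest such set, $\{\mathsf{Q}\in\mathcal{P}:\mathsf{E}_\mathsf{Q}X\ge u(X)\ \forall X\in L^0\}$. For a coherent utility $u$ with determining set $\mathcal{D}$, $L^1_w(\mathcal{D})=\{X\in L^0:u(X)>-\infty,\ u(-X)>-\infty\}$. $\mathrm{cl}$ denotes closure and $\mathrm{conv}$ convex hull. *)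

(* Defs.v *)
From HB Require Import structures.
From mathcomp Require Import all_boot all_order all_algebra.
From mathcomp Require Import all_classical all_reals all_analysis.
Set Implicit Arguments. Unset Strict Implicit. Unset Printing Implicit Defensive.
Import Order.TTheory GRing.Theory Num.Theory.
Import numFieldNormedType.Exports.
Local Open Scope classical_set_scope.
Local Open Scope ring_scope.

Section Defs.
Context {dT : measure_display} {T : measurableType dT} {R : realType}.

Definition L0 (X : T -> R) : Prop := measurable_fun setT X.

Definition abs_cont (Q P : probability T R) : Prop :=
  forall A, measurable A -> P A = 0%E -> Q A = 0%E.

(* E_Q X := E_Q X^+ - E_Q X^-, with the convention oo - oo = -oo
   (this is the convention of MathComp's extended-real addition). *)
Definition EQ (Q : probability T R) (X : T -> R) : \bar R :=
  ((\int[Q]_x (Num.max (X x) 0)%:E) - (\int[Q]_x (Num.max (- X x) 0)%:E))%E.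

Definition coherent_utility (P : probability T R) (u : (T -> R) -> \bar R) : Prop :=
  exists D : set (probability T R),
    D !=set0 /\ (forall Q, D Q -> abs_cont Q P) /\
    forall X, L0 X -> u X = ereal_inf [set EQ Q X | Q in D].

Definition determining_set (P : probability T R) (u : (T -> R) -> \bar R)
  : set (probability T R) :=
  [set Q | abs_cont Q P /\ forall X, L0 X -> (u X <= EQ Q X)%E].

Definition L1w (u : (T -> R) -> \bar R) : set (T -> R) :=
  [set X | L0 X /\ (-oo < u X)%E /\ (-oo < u (fun w => (- X w)%R))%E].

End Defs.

Definition dotv {R : realType} {d : nat} (x y : 'rV[R]_d) : R :=
  \sum_(i < d) x ord0 i * y ord0 i.
Definition enorm {R : realType} {d : nat} (x : 'rV[R]_d) : R :=
  Num.sqrt (dotv x x).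

Definition pairRV {T : Type} {R : realType} {d : nat}
  (h : 'rV[R]_d) (X : 'I_d -> T -> R) : T -> R :=
  fun w => \sum_(i < d) h ord0 i * X i w.

(* E_Q X for a vector X, as a point of R^d (components are finite on
   the relevant sets) *)
Definition EQv {dT : measure_display} {T : measurableType dT} {R : realType} {d : nat}
  (Q : probability T R) (X : 'I_d -> T -> R) : 'rV[R]_d :=
  \row_(i < d) fine (EQ Q (X i)).

Definition convex_setv {R : realType} {d : nat} (C : set 'rV[R]_d) : Prop :=
  forall x y (t : R), C x -> C y -> 0 <= t -> t <= 1 -> C (t *: x + (1 - t) *: y).
Definition convhull {R : realType} {d : nat} (A : set 'rV[R]_d) : set 'rV[R]_d :=
  \bigcap_(C in [set C | convex_setv C /\ A `<=` C]) C.

(* Main.v *)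
Require Import Defs.
From HB Require Import structures.
From mathcomp Require Import all_boot all_order all_algebra.
From mathcomp Require Import all_classical all_reals all_analysis.
From mathcomp Require Import measurable_realfun.
Import Order.TTheory GRing.Theory Num.Theory.
Import numFieldNormedType.Exports.
Local Open Scope classical_set_scope.
Local Open Scope ring_scope.
Set Implicit Arguments. Unset Strict Implicit. Unset Printing Implicit Defensive.
From mathcomp.algebra_tactics Require Import ring lra.
Section P1.
Variable R : realType.
Variable d : nat.
Implicit Types x y z h : 'rV[R]_d.

Lemma dotvC x y : dotv x y = dotv y x.
Proof. by rewrite /dotv; apply: eq_bigr => i _; rewrite mulrC. Qed.

Lemma dotvDl x y z : dotv (x + y) z = dotv x z + dotv y z.
Proof. by rewrite /dotv -big_split; apply: eq_bigr => i _; rewrite mxE mulrDl. Qed.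

Lemma dotvZl (a : R) x y : dotv (a *: x) y = a * dotv x y.
Proof. by rewrite /dotv mulr_sumr; apply: eq_bigr => i _; rewrite mxE mulrA. Qed.

Lemma dotvDr x y z : dotv x (y + z) = dotv x y + dotv x z.
Proof. by rewrite dotvC dotvDl !(dotvC x). Qed.

Lemma dotvZr (a : R) x y : dotv x (a *: y) = a * dotv x y.
Proof. by rewrite dotvC dotvZl dotvC. Qed.

Lemma dotvNl x y : dotv (- x) y = - dotv x y.
Proof. by rewrite -scaleN1r dotvZl mulN1r. Qed.

Lemma dotvNr x y : dotv x (- y) = - dotv x y.
Proof. by rewrite -scaleN1r dotvZr mulN1r. Qed.

Lemma dotvBl x y z : dotv (x - y) z = dotv x z - dotv y z.
Proof. by rewrite dotvDl dotvNl. Qed.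

Lemma dotvBr x y z : dotv x (y - z) = dotv x y - dotv x z.
Proof. by rewrite dotvDr dotvNr. Qed.

Lemma dotv0l y : dotv 0 y = 0.
Proof. by rewrite /dotv big1 // => i _; rewrite mxE mul0r. Qed.

Lemma dotv0r y : dotv y 0 = 0.
Proof. by rewrite dotvC dotv0l. Qed.

Lemma dotv_ge0 x : 0 <= dotv x x.
Proof. by rewrite /dotv sumr_ge0 // => i _; rewrite -expr2 sqr_ge0. Qed.

Lemma coord_le_norm x i : `|x ord0 i| <= `|x|.
Proof.
have -> : `|x| = mx_norm x by [].
rewrite mx_normrE.
exact: (le_bigmax 0 (fun ij : 'I_1 * 'I_d => `|x ij.1 ij.2|) (ord0, i)).
Qed.

Lemma norm_sq_le_dotv x : `|x| ^+ 2 <= dotv x x.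
Proof.
have -> : `|x| = mx_norm x by [].
have [x0|xn0] := eqVneq (mx_norm x) 0.
  by rewrite x0 expr0n /= dotv_ge0.
have [[i j] /= ->] := mx_norm_neq0 xn0.
rewrite /dotv (bigD1 j) //= ord1 real_normK ?num_real //.
rewrite expr2 lerDl sumr_ge0 // => k _; by rewrite -expr2 sqr_ge0.
Qed.

Lemma dotv_gt0 x : x != 0 -> 0 < dotv x x.
Proof.
move=> xn0; apply: lt_le_trans (norm_sq_le_dotv x).
by rewrite exprn_gt0 // normr_gt0.
Qed.

Lemma dotv_le x y : `|dotv x y| <= d%:R * `|x| * `|y|.
Proof.
rewrite /dotv; apply: le_trans (ler_norm_sum _ _ _) _.
have -> : d%:R * `|x| * `|y| = \sum_(i < d) (`|x| * `|y|).
  by rewrite sumr_const card_ord -mulrA mulr_natl.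
apply: ler_sum => i _; rewrite normrM.
by apply: ler_pM => //; apply: coord_le_norm.
Qed.

End P1.
Section P2.
Variable R : realType.

Lemma cont_sum {T : topologicalType} {V : normedModType R} (I : Type) (s : seq I)
  (F : I -> T -> V) : (forall i, continuous (F i)) ->
  continuous (fun x => \sum_(i <- s) F i x).
Proof.
move=> Fc; elim: s => [|a s IH].
  have -> : (fun x => \sum_(i <- [::]) F i x) = cst 0.
    by apply: funext => x; rewrite big_nil.
  exact: cst_continuous.
have -> : (fun x => \sum_(i <- a :: s) F i x) = F a + (fun x => \sum_(i <- s) F i x).
  by apply: funext => x; rewrite big_cons.
by move=> x; apply: continuousD; [exact: Fc | exact: IH].
Qed.

Lemma cont_dotv {T : topologicalType} (d : nat) (g1 g2 : T -> 'rV[R]_d) :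
  continuous g1 -> continuous g2 -> continuous (fun x => dotv (g1 x) (g2 x)).
Proof.
move=> c1 c2; rewrite /dotv.
apply: (@cont_sum T R^o _ _ (fun i x => g1 x ord0 i * g2 x ord0 i)) => i x.
apply: (@continuousM R T (fun x => g1 x ord0 i) (fun x => g2 x ord0 i) x).
  exact: (continuous_comp (c1 x) (@coord_continuous R 1 d ord0 i (g1 x))).
exact: (continuous_comp (c2 x) (@coord_continuous R 1 d ord0 i (g2 x))).
Qed.

Lemma cont_dotv_l (d : nat) (a : 'rV[R]_d) : continuous (fun h : 'rV[R]_d => dotv h a).
Proof. apply: cont_dotv => x; [exact: cvg_id | exact: (@cst_continuous _ _ a x)]. Qed.

Lemma cont_dotv_r (d : nat) (a : 'rV[R]_d) : continuous (fun h : 'rV[R]_d => dotv a h).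
Proof. apply: cont_dotv => x; [exact: (@cst_continuous _ _ a x) | exact: cvg_id]. Qed.

Lemma cont_comb (n d : nat) (s : seq 'rV[R]_d) :
  continuous (fun l : 'rV[R]_n => \sum_(j < n) l ord0 j *: nth 0 s j).
Proof.
apply: (@cont_sum 'rV[R]_n 'rV[R]_d _ (index_enum 'I_n) (fun j l => l ord0 j *: nth 0 s j)) => j x.
apply: continuousZr_tmp; exact: coord_continuous.
Qed.

End P2.
Section P3.
Variable R : realType.

Definition inconv (d : nat) (s : seq 'rV[R]_d) (y : 'rV[R]_d) :=
  forall C, convex_setv C -> (forall a, a \in s -> C a) -> C y.

Lemma comb_in (d : nat) (s : seq 'rV[R]_d) (w : nat -> R) :
  (forall j, 0 <= w j) -> \sum_(j < size s) w j = 1 ->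
  inconv s (\sum_(j < size s) w j *: nth 0 s j).
Proof.
move=> + + C Cc; elim: s w => [|a s IH] w w0 w1 Cs.
  by move: w1; rewrite big_ord0 => /eqP; rewrite eq_sym oner_eq0.
move: w1; rewrite /= big_ord_recl /= => w1.
rewrite big_ord_recl /=.
have Ca : C a by apply: Cs; rewrite in_cons eqxx.
have Cs' : forall b, b \in s -> C b by move=> b bs; apply: Cs; rewrite in_cons bs orbT.
have rest0 : 0 <= \sum_(i < size s) w (lift ord0 i) by apply: sumr_ge0 => i _.
have [w01|w0n1] := eqVneq (w 0%N) 1.
  have : \sum_(i < size s) w (lift ord0 i) = 0.
    by move: w1; rewrite w01 => /(congr1 (fun x => x - 1)); rewrite subrr addrC addKr.
  move/eqP; rewrite psumr_eq0 // => /allP H.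
  rewrite big1 ?addr0 ?w01 ?scale1r // => i _.
  have /implyP/(_ isT)/eqP -> := H i (mem_index_enum _).
  by rewrite scale0r.
have lt1 : w 0%N < 1.
  rewrite lt_neqAle w0n1 /= -w1 lerDl //.
have pos : 0 < 1 - w 0%N by rewrite subr_gt0.
pose w' j := w j.+1 / (1 - w 0%N).
have Hw' : C (\sum_(j < size s) w' j *: nth 0 s j).
  apply: IH => //.
    by move=> j; rewrite /w' divr_ge0 // ltW.
  rewrite /w' -mulr_suml.
  have -> : \sum_(i < size s) w i.+1 = 1 - w 0%N.
    by rewrite -w1 [w 0%N + _]addrC addrK; apply: eq_bigr => i _; rewrite /bump leq0n add1n.
  by rewrite divff // gt_eqF.
have := Cc _ _ (w 0%N) Ca Hw' (w0 _) (ltW lt1).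
congr C; congr (_ + _).
rewrite scaler_sumr; apply: eq_bigr => i _; rewrite scalerA /w' /bump leq0n add1n /=.
by rewrite mulrC -mulrA mulVf ?mulr1 // gt_eqF.
Qed.

End P3.
Section P4.
Variable R : realType.

Lemma real_t (b c : R) : 0 <= c ->
  (forall t, 0 < t -> t <= 1 -> 0 <= 2 * b + t * c) -> 0 <= b.
Proof.
move=> c0 H; rewrite leNgt; apply/negP => b0.
have cb : 0 < c - b by lra.
have tpos : 0 < - b / (c - b) by rewrite divr_gt0 // oppr_gt0.
have tle : - b / (c - b) <= 1 by rewrite ler_pdivrMr // mul1r; lra.
have := H _ tpos tle.
have e : (- b / (c - b)) * (c - b) = - b by rewrite divfK // gt_eqF.
move: e; set t := - b / (c - b) => e; nra.
Qed.

Lemma norm_le_coord (d : nat) (x : 'rV[R]_d) (B : R) : 0 <= B ->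
  (forall i, `|x ord0 i| <= B) -> `|x| <= B.
Proof.
move=> B0 H; have -> : `|x| = mx_norm x by [].
rewrite mx_normrE; apply: bigmax_le => // [[i j]] _ /=.
by rewrite ord1; apply: H.
Qed.

Lemma bounded_by (d : nat) (A : set 'rV[R]_d) (B : R) :
  (forall x, A x -> `|x| <= B) -> bounded_set A.
Proof.
move=> H; exists B; split; first exact: num_real.
by move=> M BM x Ax; apply: le_trans (H x Ax) (ltW BM).
Qed.

End P4.
Section P5.
Variable R : realType.

Definition ev (n : nat) (j : 'I_n) : 'rV[R]_n := \row_k ((k == j)%:R).

Lemma expand_sq (d : nat) (h q : 'rV[R]_d) t :
  dotv (h + t *: q) (h + t *: q) = dotv h h + 2 * t * dotv h q + t ^+ 2 * dotv q q.
Proof.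
rewrite !(dotvDl, dotvDr, dotvZl, dotvZr) (dotvC q h); ring.
Qed.

Lemma sep_fin (d : nat) (s : seq 'rV[R]_d) (y : 'rV[R]_d) : s != [::] ->
  inconv s y \/ exists h, 0 < dotv h h /\
     forall a, a \in s -> dotv h y + dotv h h <= dotv h a.
Proof.
case: s => [//|a0 s'] _; set s := a0 :: s'.
pose n := size s.
pose Del := [set l : 'rV[R]_n | (forall j, 0 <= l ord0 j) /\ \sum_j l ord0 j = 1].
pose phi (l : 'rV[R]_n) := \sum_(j < n) l ord0 j *: nth 0 s j.
pose f l := dotv (phi l - y) (phi l - y).
have phiE l : Del l -> inconv s (phi l).
  move=> [l0 l1].
  have E1 : forall j : 'I_n, l ord0 (inord j) = l ord0 j by move=> j; rewrite inord_val.
  have -> : phi l = \sum_(j < size s) l ord0 (inord j) *: nth 0 s j.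
    by apply: eq_bigr => j _; rewrite E1.
  apply: (@comb_in R d s (fun j : nat => l ord0 (inord j))) => [j|]; first exact: l0.
  by rewrite -l1; apply: eq_bigr => j _; rewrite E1.
have evD j : Del (ev j).
  split; first by move=> k; rewrite mxE ler0n.
  rewrite (bigD1 j) //= mxE eqxx big1 ?addr0 // => k /negbTE kj.
  by rewrite mxE kj.
have phi_ev j : phi (ev j) = nth 0 s j.
  rewrite /phi (bigD1 j) //= mxE eqxx scale1r big1 ?addr0 // => k /negbTE kj.
  by rewrite mxE kj scale0r.
have phiL (t : R) l1 l2 : phi (t *: l1 + (1 - t) *: l2) = t *: phi l1 + (1 - t) *: phi l2.
  rewrite /phi !scaler_sumr -big_split /=; apply: eq_bigr => j _.
  by rewrite !mxE !scalerA -scalerDl.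
have Dconv t l1 l2 : Del l1 -> Del l2 -> 0 <= t -> t <= 1 -> Del (t *: l1 + (1 - t) *: l2).
  move=> [p1 s1] [p2 s2] t0 t1; split.
    move=> j; rewrite !mxE; apply: addr_ge0; apply: mulr_ge0; try lra; [exact: p1 | exact: p2].
  under eq_bigr do rewrite !mxE.
  by rewrite big_split /= -!mulr_sumr s1 s2 !mulr1 addrC subrK.
have Dcl : closed Del.
  have -> : Del = (\bigcap_(j in setT) [set l : 'rV[R]_n | 0 <= l ord0 j]) `&`
                  ((fun l : 'rV[R]_n => \sum_j l ord0 j) @^-1` [set 1]).
    apply/seteqP; split => l /=.
      by move=> [H1 H2]; split => // j _; apply: H1.
    by move=> [H1 H2]; split => // j; apply: H1.
  apply: closedI.
    apply: closed_bigI => j _.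
    apply: (@preimage_closed _ _ (fun l : 'rV[R]_n => l ord0 j) [set x | 0 <= x]).
      by move=> x _; apply: coord_continuous.
    exact: closed_ge.
  apply: preimage_closed; last exact: closed_eq.
  move=> x _.
  apply: (@cont_sum R 'rV[R]_n R^o _ (index_enum 'I_n) (fun j l => l ord0 j)) => j.
  exact: coord_continuous.
have Dbd : bounded_set Del.
  apply: (@bounded_by _ _ Del 1) => l [l0 l1].
  apply: norm_le_coord => // i; rewrite ger0_norm; last exact: l0.
  by rewrite -l1 (bigD1 i) //= lerDl sumr_ge0 // => k _; exact: l0.
have Dcpt : compact Del by apply: bounded_closed_compact.
have Dne : Del !=set0 by exists (ev ord0).
have fc : continuous f.
  apply: cont_dotv => x; apply: continuousB; try exact: cont_comb;
    exact: (@cst_continuous _ _ y x).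
have [lm lmD lmmin] := EVT_min_rV Dne Dcpt (continuous_subspaceT fc).
move: lmD; rewrite inE => lmD.
set p := phi lm.
have [py|pny] := eqVneq p y.
  by left; rewrite -py; apply: phiE.
right; exists (p - y); split; first by apply: dotv_gt0; rewrite subr_eq0.
move=> a as_.
have jP : (index a s < n)%N by rewrite index_mem.
pose j : 'I_n := Ordinal jP.
have aj : nth 0 s j = a by rewrite nth_index.
set h := p - y; set q := a - p.
have key t : 0 < t -> t <= 1 -> 0 <= 2 * dotv h q + t * dotv q q.
  move=> t0 t1.
  have lt := Dconv (1 - t) lm (ev j) lmD (evD j) ltac:(lra) ltac:(lra).
  have := lmmin _ (mem_set lt); rewrite /f phiL phi_ev aj -/p.
  have -> : (1 - t) *: p + (1 - (1 - t)) *: a - y = h + t *: q.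
    by rewrite /h /q; apply/rowP => k; rewrite !mxE; ring.
  rewrite expand_sq => H.
  nra.
have b0 := real_t (dotv_ge0 q) key.
move: b0; rewrite /q dotvBr.
have : dotv h p = dotv h h + dotv h y by rewrite -dotvDr /h subrK.
lra.
Qed.

End P5.
Section P6.
Variable R : realType.
Variable d : nat.

Lemma half_convex (h : 'rV[R]_d) (b : R) : convex_setv [set x | b <= dotv h x].
Proof.
move=> x y t /= bx bY t0 t1; rewrite dotvDr !dotvZr.
have -> : b = t * b + (1 - t) * b by ring.
apply: lerD; apply: ler_wpM2l => //; lra.
Qed.

Lemma int_from (G : set 'rV[R]_d) (rho s : R) (Tp : 'rV[R]_d) :
  convex_setv G -> 0 < rho -> (forall y, `|y| < rho -> G y) ->
  1 < s -> G (s *: Tp) -> interior G Tp.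
Proof.
move=> Gc r0 Hb s1 Gs.
rewrite /interior; apply/nbhs_ballP.
have s0 : 0 < s by lra.
have s10 : 0 < s - 1 by lra.
exists (rho * (s - 1) / s); first by rewrite /= divr_gt0 // mulr_gt0.
move=> z; rewrite -ball_normE /= => Hz.
pose w := (s / (s - 1)) *: (z - Tp).
have Gw : G w.
  apply: Hb; rewrite /w normrZ ger0_norm ?divr_ge0 ?ltW //.
  rewrite distrC in Hz; move: Hz; set n := `|z - Tp|.
  rewrite ltr_pdivlMr // => Hz.
  rewrite mulrAC ltr_pdivrMr //; nra.
have si0 : 0 <= s^-1 by rewrite invr_ge0 ltW.
have si1 : s^-1 <= 1 by rewrite invf_le1 // ltW.
have := Gc _ _ (s^-1) Gs Gw si0 si1.
congr G; apply/rowP => k; rewrite /w !mxE.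
field; lra.
Qed.

End P6.
Section P7.
Variable R : realType.
Variable d : nat.

Lemma ev_norm (j : 'I_d) : `|ev R j| = 1.
Proof.
apply/eqP; rewrite eq_le; apply/andP; split.
  by apply: norm_le_coord => // i; rewrite mxE; case: (i == j); rewrite ?normr1 ?normr0.
by have := coord_le_norm (ev R j) j; rewrite mxE eqxx normr1.
Qed.

Lemma sphere_cover (A : set 'rV[R]_d) : (0 < d)%N ->
  (forall h, h != 0 -> exists2 a, A a & dotv h a < 0) ->
  exists F0 : seq 'rV[R]_d, exists r : R,
    [/\ F0 != [::], (forall a, a \in F0 -> A a), 0 < r &
        forall h, `|h| = 1 -> exists2 a, a \in F0 & dotv h a < - r].
Proof.
move=> d0 Hn.
pose S := [set h : 'rV[R]_d | `|h| = 1].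
have Scl : closed S.
  apply: (@preimage_closed _ _ (fun h : 'rV[R]_d => `|h|) [set x | x = 1]).
    by move=> x _; apply: norm_continuous.
  exact: closed_eq.
have Sbd : bounded_set S by apply: (@bounded_by _ _ S 1) => x ->.
have Scpt : compact S by apply: bounded_closed_compact.
move: Scpt; rewrite compact_cover => /(_ ('rV[R]_d * nat)%type [set p | A p.1]
   (fun p => [set h | dotv h p.1 < - (p.2.+1%:R)^-1])) [].
- move=> p _.
  apply: (@open_comp _ _ (fun h => dotv h p.1) [set x | x < - (p.2.+1%:R)^-1]).
    by move=> x _; apply: cont_dotv_l.
  exact: open_lt.
- move=> h Sh.
  have hn0 : h != 0 by apply/eqP => h0; move: Sh; rewrite /S /= h0 normr0 => /eqP; rewrite eq_sym oner_eq0.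
  have [a Aa ha] := Hn h hn0.
  set e := - dotv h a.
  have e0 : 0 < e by rewrite /e oppr_gt0.
  pose k := Num.truncn (e^-1).
  have kl : (k.+1%:R)^-1 < e.
    rewrite -[e]invrK ltf_pV2 ?posrE ?invr_gt0 ?ltr0Sn //.
    exact: truncnS_gt.
  exists (a, k) => //=.
  by rewrite ltrNr.
move=> D' D'sub cov.
pose F0 := [seq p.1 | p <- finmap.enum_fset D'].
pose k0 := \max_(p <- finmap.enum_fset D') p.2.
exists F0, (k0.+1%:R)^-1; split.
- have [p pD' _] := cov (ev R (Ordinal d0)) (ev_norm _).
  apply/eqP => F00.
  have : p.1 \in F0 by apply: map_f.
  by rewrite F00.
- move=> a /mapP [p pD' ->].
  by have := D'sub p pD'; rewrite inE.
- by rewrite invr_gt0 ltr0Sn.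
- move=> h /cov [p pD' hp].
  exists p.1; first exact: map_f.
  apply: lt_le_trans hp _; rewrite lerN2 lef_pV2 ?posrE ?ltr0Sn // ler_nat ltnS.
  by apply: (leq_bigmax_seq (F := fun p : ('rV[R]_d * nat)%type => p.2)).
Qed.

End P7.
Section P8.
Variable R : realType.
Variable d : nat.

Lemma closed_halfs (P : set 'rV[R]_d) (c : R) :
  closed [set h : 'rV[R]_d | forall a, P a -> c <= dotv h a].
Proof.
have -> : [set h : 'rV[R]_d | forall a, P a -> c <= dotv h a] =
          \bigcap_(a in P) [set h | c <= dotv h a].
  by apply/seteqP; split => h /= H a Pa; apply: H.
apply: closed_bigI => a _.
apply: (@preimage_closed _ _ (fun h => dotv h a) [set x | c <= x]).
  by move=> x _; apply: cont_dotv_l.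
exact: closed_ge.
Qed.

Lemma dotv_normed (h : 'rV[R]_d) : h != 0 -> `| `|h|^-1 *: h | = 1.
Proof. by move=> hn0; apply: normrZV; rewrite unitfE normr_eq0. Qed.

Lemma small_vec (h : 'rV[R]_d) (rho : R) : 0 < rho -> h != 0 ->
  let z := (- (rho / 2) / `|h|) *: h in
  `|z| < rho /\ dotv h z <= - (rho / 2) * `|h|.
Proof.
move=> r0 hn0 z.
have nh0 : 0 < `|h| by rewrite normr_gt0.
split.
  rewrite /z normrZ normrM normrN normrV ?unitfE ?normr_eq0 // normr_id.
  rewrite -mulrA mulVf ?gt_eqF // mulr1 ger0_norm; last by rewrite divr_ge0 // ltW.
  lra.
rewrite /z dotvZr.
have := norm_sq_le_dotv h; set D := dotv h h => HD.
have -> : - (rho / 2) / `|h| * D = - ((rho / 2) / `|h| * D) by rewrite !mulNr.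
have -> : - (rho / 2) * `|h| = - ((rho / 2) / `|h| * `|h| ^+ 2).
  by rewrite expr2 mulrA divfK ?gt_eqF // mulNr.
rewrite lerN2; apply: ler_wpM2l => //; rewrite divr_ge0 // ?ltW //; lra.
Qed.

End P8.
Section P9.
Variable R : realType.
Variable d : nat.

Lemma geo (A G : set 'rV[R]_d) (Tp : 'rV[R]_d) : (0 < d)%N ->
  convex_setv G -> A `<=` G ->
  (forall h, h != 0 -> exists2 a, A a & dotv h a < 0) ->
  ~ interior G Tp ->
  exists h, (forall a, A a -> -1 <= dotv h a) /\ dotv h Tp <= -1.
Proof.
move=> d0 Gc AG Hn nint.
have [F0 [r [F0n F0A r0 F0cov]]] := sphere_cover d0 Hn.
have dpos : 0 < d%:R :> R by rewrite ltr0n.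
pose rho := r / d%:R.
have rho0 : 0 < rho by rewrite divr_gt0.
have ball : forall y, `|y| < rho -> inconv F0 y.
  move=> y yr; case: (sep_fin y F0n) => // [[h [hpos hsep]]].
  exfalso.
  have hn0 : h != 0 by apply/eqP => h0; move: hpos; rewrite h0 dotv0l ltxx.
  have nh0 : 0 < `|h| by rewrite normr_gt0.
  have [a aF ha] := F0cov _ (dotv_normed hn0).
  have := hsep a aF.
  move: ha; rewrite !dotvZl => ha hs.
  have Hy := dotv_le (`|h|^-1 *: h) y.
  rewrite dotv_normed // mulr1 dotvZl ler_norml in Hy.
  case/andP: Hy => Hy _.
  have : d%:R * `|y| < r by rewrite mulrC -ltr_pdivlMr.
  have : `|h|^-1 * dotv h y < `|h|^-1 * dotv h a.
    rewrite ltr_pM2l ?invr_gt0 //; lra.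
  lra.
have inG y : inconv F0 y -> G y.
  by move=> H; apply: H => // a aF; apply: AG; apply: F0A.
pose KF0 := [set h : 'rV[R]_d | forall a, [set a | a \in F0] a -> -1 <= dotv h a].
have KF0bd : forall h, KF0 h -> `|h| <= 2 / rho.
  move=> h Kh; have [->|hn0] := eqVneq h 0.
    by rewrite normr0 divr_ge0 // ltW.
  have [zr zh] := small_vec rho0 hn0.
  have := ball _ zr [set x | -1 <= dotv h x] (half_convex (h:=h) (b:=-1)) Kh.
  rewrite /= => H.
  rewrite ler_pdivlMr //; nra.
pose K := [set h : 'rV[R]_d | forall a, A a -> -1 <= dotv h a].
have KKF0 h : K h -> KF0 h by move=> Kh a aF; apply: Kh; apply: F0A.
have Kcpt : compact K.
  apply: bounded_closed_compact; last exact: closed_halfs.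
  by apply: (@bounded_by _ _ K (2 / rho)) => h /KKF0 /KF0bd.
have K0 : K 0 by move=> a _; rewrite dotv0l lerN10.
have Kne : K !=set0 by exists 0.
have [hs hsK hsmax] := EVT_max_rV Kne Kcpt (continuous_subspaceT (cont_dotv_l (a:=- Tp))).
move: hsK; rewrite inE => hsK.
case: (lerP (dotv hs Tp) (-1)) => [le|gt]; first by exists hs.
exfalso.
pose v := dotv hs (- Tp).
have v1 : v < 1 by rewrite /v dotvNr; lra.
have v0 : 0 <= v by have := hsmax 0 (mem_set K0); rewrite dotv0l.
pose s := 2 / (1 + v).
have s1 : 1 < s by rewrite /s ltr_pdivlMr; lra.
have sv : s * v < 1 by rewrite /s mulrAC ltr_pdivrMr; lra.
have hK h : K h -> -1 < dotv h (s *: Tp).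
  move=> Kh; have := hsmax h (mem_set Kh).
  rewrite dotvZr dotvNr -/v => H.
  have s0 : 0 < s by lra.
  have : s * - dotv h Tp <= s * v by rewrite ler_pM2l.
  lra.
pose Z := KF0 `&` [set h | dotv h (s *: Tp) <= -1].
have Zcpt : compact Z.
  apply: bounded_closed_compact.
    by apply: (@bounded_by _ _ Z (2 / rho)) => h [/KF0bd].
  apply: closedI; first exact: closed_halfs.
  apply: (@preimage_closed _ _ (fun h => dotv h (s *: Tp)) [set x | x <= -1]).
    by move=> x _; apply: cont_dotv_l.
  exact: closed_le.
move: Zcpt; rewrite compact_cover => /(_ 'rV[R]_d A (fun a => [set h | dotv h a < -1])) [].
- move=> a _.
  apply: (@open_comp _ _ (fun h => dotv h a) [set x | x < -1]).
    by move=> x _; apply: cont_dotv_l.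
  exact: open_lt.
- move=> h [_ hZ].
  case: (pselect (exists2 a, A a & dotv h a < -1)) => [[a Aa ha] | Hno].
    by exists a.
  exfalso; suff Kh : K h by have := hK h Kh; rewrite ltNge hZ.
  move=> a Aa; rewrite leNgt; apply/negP => ha; apply: Hno; exists a => //.
move=> D' D'sub cov.
pose F := F0 ++ finmap.enum_fset D'.
have FA a : a \in F -> A a.
  rewrite mem_cat => /orP [/F0A //|aD].
  by have := D'sub a aD; rewrite inE.
have Fn : F != [::].
  by move: F0n; rewrite /F; case: (F0).
case: (sep_fin (s *: Tp) Fn) => [inF | [h [hpos hsep]]].
  apply: nint; apply: (int_from Gc rho0 (fun y yr => inG y (ball y yr)) s1).
  by apply: inF => // a /FA /AG.
have hn0 : h != 0 by apply/eqP => h0; move: hpos; rewrite h0 dotv0l ltxx.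
set c0 := dotv h (s *: Tp) + dotv h h.
have [zr zh] := small_vec rho0 hn0.
have := ball _ zr [set x | c0 <= dotv h x] (half_convex (h:=h) (b:=c0)).
move=> /(_ _) Hc.
have Hc0 : c0 <= - (rho / 2) * `|h|.
  apply: le_trans zh; apply: Hc => a aF; apply: hsep; by rewrite mem_cat aF.
have nh0 : 0 < `|h| by rewrite normr_gt0.
have beta0 : 0 < - c0 by nra.
pose h' := (- c0)^-1 *: h.
have Zh' : Z h'.
  split.
    move=> a /= aF; rewrite /h' dotvZl.
    have : c0 <= dotv h a by apply: hsep; rewrite mem_cat aF.
    move=> H; rewrite ler_pdivlMl //; nra.
  rewrite /= /h' dotvZl ler_pdivrMl //.
  rewrite /c0 in beta0 *; lra.
have [a aD ha] := cov _ Zh'.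
have aF : a \in F by rewrite mem_cat aD orbT.
move: ha; rewrite /= /h' dotvZl.
have H := hsep a aF.
rewrite ltr_pdivrMl // /c0; lra.
Qed.

End P9.
Section P10.
Context {dT : measure_display} {T : measurableType dT} {R : realType}.
Local Open Scope ereal_scope.

Lemma EQ_pn (Q : probability T R) (f : T -> R) :
  EQ Q f = \int[Q]_x (EFin \o f)^\+ x - \int[Q]_x (EFin \o f)^\- x.
Proof.
rewrite /EQ; congr (_ - _); apply: eq_integral => x _.
  by rewrite funeposE /= EFin_max.
by rewrite funenegE /= EFin_max EFinN.
Qed.

Lemma EQ_N_pn (Q : probability T R) (f : T -> R) :
  EQ Q (fun w => (- f w)%R) = \int[Q]_x (EFin \o f)^\- x - \int[Q]_x (EFin \o f)^\+ x.
Proof.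
rewrite /EQ; congr (_ - _); apply: eq_integral => x _.
  by rewrite funenegE /= EFin_max EFinN.
by rewrite funeposE /= opprK EFin_max.
Qed.

Lemma EQ_int (Q : probability T R) (f : T -> R) : EQ Q f = \int[Q]_x (f x)%:E.
Proof. by rewrite EQ_pn [RHS]integralE. Qed.

Lemma int_of_fin (Q : probability T R) (f : T -> R) : measurable_fun setT f ->
  -oo < EQ Q f -> -oo < EQ Q (fun w => (- f w)%R) ->
  Q.-integrable setT (EFin \o f).
Proof.
move=> mf; rewrite EQ_N_pn EQ_pn.
have mg : measurable_fun [set: T] (EFin \o f : T -> \bar R) by apply/measurable_EFinP.
have P0 : 0 <= \int[Q]_x (EFin \o f)^\+ x by apply: integral_ge0 => x _; exact: funepos_ge0.
have N0 : 0 <= \int[Q]_x (EFin \o f)^\- x by apply: integral_ge0 => x _; exact: funeneg_ge0.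
move: P0 N0.
set P := \int[Q]_x _; set N := \int[Q]_x _ => P0 N0 H1 H2.
have Nf : N < +oo.
  move: H1 H2; case: N N0 => [r| |] //= _ ; [by rewrite ltry | by rewrite addeNy ltxx].
have Pf : P < +oo.
  move: H1 H2; case: P P0 => [r| |] //= _ ; [by rewrite ltry | by move=> _; rewrite addeNy ltxx].
apply/integrableP; split => //.
rewrite -/((abse \o (EFin \o f))) fune_abse.
rewrite ge0_integralD //; try exact: lte_add_pinfty Pf Nf;
  try exact: measurable_funepos; try exact: measurable_funeneg;
  try (by move=> x _; exact: funepos_ge0); try (by move=> x _; exact: funeneg_ge0).
Qed.

Lemma EQ_pair (Q : probability T R) (d : nat) (h : 'rV[R]_d) (X : 'I_d -> T -> R) :
  (forall i, Q.-integrable setT (EFin \o X i)) ->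
  EQ Q (pairRV h X) = (dotv h (EQv Q X))%:E.
Proof.
move=> Xi; rewrite EQ_int /pairRV /dotv.
under eq_integral do rewrite -sumEFin.
rewrite integral_sum //; last first.
  move=> i.
  have -> : (fun x => (h ord0 i * X i x)%:E) = (fun x => (h ord0 i)%:E * (EFin \o X i) x).
    by apply: funext => x; rewrite EFinM.
  exact: integrableZl.
rewrite -sumEFin; apply: eq_bigr => i _.
under eq_integral do rewrite EFinM.
rewrite integralZl //; last exact: Xi.
rewrite /EQv mxE EQ_int EFinM fineK //.
exact: (integrable_fin_num measurableT (Xi i)).
Qed.

Lemma scal_le (c x : R) : (0 < c)%R -> (-1 <= c^-1 * x)%R = (- c <= x)%R.
Proof. by move=> c0; rewrite mulrC ler_pdivlMr // mulN1r. Qed.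

End P10.
Theorem theorem4p1 (dT : measure_display) (T : measurableType dT) (R : realType)
  (P : probability T R) (M d : nat)
  (u : 'I_M -> (T -> R) -> \bar R)
  (Hu : forall m, coherent_utility P (u m))
  (X : 'I_d -> T -> R)
  (HX : forall i m, L1w (u m) (X i))
  (Hneg : forall (h : 'rV[R]_d) m, h != 0 -> (u m (pairRV h X) < 0)%E)
  (E : 'rV[R]_d) (HE : E != 0)
  (c : 'I_M -> R) (Hc : forall m, 0 < c m)
  (Tp : 'rV[R]_d) :
  let D m := determining_set P (u m) in
  let Gm m := closure [set EQv Q X | Q in D m] in
  let G := convhull (\bigcup_(m in setT) [set (c m)^-1 *: x | x in Gm m]) in
  (closure G `\` interior G) Tp ->
  (exists t : R, 0 < t /\ Tp = - (t *: E)) ->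
  let N := [set h : 'rV[R]_d | forall x, G x -> dotv h Tp <= dotv h x] in
  let feasible := [set h : 'rV[R]_d |
                    forall m, (- u m (pairRV h X) <= (c m)%:E)%E] in
  let solutions := [set h | feasible h /\
                    forall h', feasible h' -> dotv h' E <= dotv h E] in
  solutions = [set h | N h /\ dotv h Tp = -1] /\
  solutions !=set0 /\
  (forall h, solutions h -> dotv h E = enorm E / enorm Tp).
Proof.
move=> D Gm G [TclG TnintG] [t [t0 TpE]] N feasible solutions.
have d0 : (0 < d)%N.
  have [i _] : exists i : 'I_d, E ord0 i != 0.
    apply/not_existsP => H; move/eqP: HE; apply; apply/rowP => i.
    rewrite mxE; apply/eqP; apply: contrapT => Hi; apply: (H i); exact/negP.
  exact: leq_ltn_trans (leq0n i) (ltn_ord i).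
have [m0 _] : exists m0 : 'I_M, True.
  apply: contrapT => Hno.
  have : closure G = set0.
    suff -> : G = set0 by rewrite closure0.
    apply/seteqP; split => // x Gx; apply: (Gx set0); split.
      by move=> ? ? ? [].
    by move=> y [m _ _]; apply: Hno; exists m.
  by move=> H; move: TclG; rewrite H.
have detD m Q : D m Q -> forall Y, L0 Y -> (u m Y <= EQ Q Y)%E.
  by move=> [_ H].
have Xint m Q : D m Q -> forall i, Q.-integrable setT (EFin \o X i).
  move=> DQ i; have [L0X [H1 H2]] := HX i m.
  apply: int_of_fin => //.
    exact: lt_le_trans H1 (detD m Q DQ _ L0X).
  apply: lt_le_trans H2 (detD m Q DQ _ _).
  exact: measurable_funN.
have EQp m Q h : D m Q -> EQ Q (pairRV h X) = (dotv h (EQv Q X))%:E.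
  by move=> DQ; apply: EQ_pair; apply: Xint DQ.
have L0p h : L0 (pairRV h X).
  rewrite /L0 /pairRV.
  apply: measurable_sum => i.
  apply: measurable_funM => //.
  by have [] := HX i m0.
have Hinf m : exists D' : set (probability T R), (forall Q, D' Q -> D m Q) /\
    forall Y, L0 Y -> u m Y = ereal_inf [set EQ Q Y | Q in D'].
  have [D' [_ [ac HuE]]] := Hu m; exists D'; split => // Q DQ; split.
    exact: ac.
  move=> Y LY; rewrite HuE //; apply: ereal_inf_lbound; by exists Q.
pose A := \bigcup_(m in setT) [set (c m)^-1 *: x | x in [set EQv Q X | Q in D m]].
have Gc : convex_setv G.
  move=> x y s Gx Gy s0 s1 C [Cc HC].
  by apply: (Cc x y s) => //; [exact: (Gx C (conj Cc HC)) | exact: (Gy C (conj Cc HC))].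
have AG : A `<=` G.
  move=> a [m _ [x [Q DQ <-] <-]] C [Cc HC]; apply: HC.
  exists m => //; exists (EQv Q X) => //; apply: subset_closure; by exists Q.
have feasA h : feasible h -> forall a, A a -> -1 <= dotv h a.
  move=> fh a [m _ [x [Q DQ <-] <-]].
  rewrite dotvZr scal_le //.
  have H1 := fh m; rewrite leeNl in H1.
  have H2 := detD m Q DQ _ (L0p h); rewrite (EQp m Q h DQ) in H2.
  by rewrite -lee_fin EFinN; apply: le_trans H1 H2.
have Afeas h : (forall a, A a -> -1 <= dotv h a) -> feasible h.
  move=> HA m; rewrite leeNl.
  have [D' [D'D HuE]] := Hinf m.
  rewrite HuE //; apply/ereal_infP => _ [Q DQ <-].
  rewrite (EQp m Q h (D'D Q DQ)) -EFinN lee_fin -scal_le //.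
  rewrite -dotvZr; apply: HA; exists m => //; exists (EQv Q X) => //.
  by exists Q => //; apply: D'D.
have halfG h : (forall a, A a -> -1 <= dotv h a) -> forall x, G x -> -1 <= dotv h x.
  move=> HA x Gx; apply: (Gx [set y | -1 <= dotv h y]); split.
    exact: half_convex.
  move=> y [m _ [z Gz <-]] /=.
  rewrite dotvZr scal_le //.
  have Hcl : closed [set w | - c m <= dotv h w].
    apply: (@preimage_closed _ _ (fun w => dotv h w) [set r | - c m <= r]).
      by move=> w _; apply: cont_dotv_r.
    exact: closed_ge.
  have : [set EQv Q X | Q in D m] `<=` [set w | - c m <= dotv h w].
    move=> w [Q DQ <-] /=; rewrite -scal_le // -dotvZr; apply: HA.
    exists m => //; exists (EQv Q X) => //; by exists Q.
  move/closureS; rewrite -(proj1 (closure_id _) Hcl); apply; exact: Gz.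
have HnA h : h != 0 -> exists2 a, A a & dotv h a < 0.
  move=> hn0; have := Hneg h m0 hn0.
  have [D' [D'D HuE]] := Hinf m0.
  rewrite HuE // => /ereal_inf_lt [_ [Q DQ <-]].
  rewrite (EQp m0 Q h (D'D Q DQ)) lte_fin => H.
  exists ((c m0)^-1 *: EQv Q X).
    exists m0 => //; exists (EQv Q X) => //; exists Q => //; exact: D'D.
  by rewrite dotvZr pmulr_rlt0 // invr_gt0.
have Tge h : (forall a, A a -> -1 <= dotv h a) -> -1 <= dotv h Tp.
  move=> HA.
  have Hcl : closed [set w | -1 <= dotv h w].
    apply: (@preimage_closed _ _ (fun w => dotv h w) [set r | -1 <= r]).
      by move=> w _; apply: cont_dotv_r.
    exact: closed_ge.
  have := closureS (halfG h HA); rewrite -(proj1 (closure_id _) Hcl); apply.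
  exact: TclG.
have [h0 [h0A h0T]] := geo d0 Gc AG HnA TnintG.
have dTp h : dotv h Tp = - (t * dotv h E) by rewrite TpE dotvNr dotvZr.
have solE : solutions = [set h | N h /\ dotv h Tp = -1].
  apply/seteqP; split => h.
    move=> [fh opt].
    have hA := feasA h fh.
    have := opt h0 (Afeas h0 h0A).
    have := Tge h hA.
    move: h0T; rewrite !dTp => h0T Th le.
    have hT : dotv h Tp = -1 by rewrite dTp; nra.
    split => //; move=> x Gx; rewrite hT; exact: halfG hA x Gx.
  move=> [Nh hT].
  have hA : forall a, A a -> -1 <= dotv h a.
    by move=> a Aa; rewrite -hT; apply: Nh; apply: AG.
  split; first exact: Afeas.
  move=> h' fh'; have := Tge h' (feasA h' fh').
  move: hT; rewrite !dTp => hT T'.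
  nra.
have h0sol : solutions h0.
  rewrite solE; split.
    move=> x Gx; have : dotv h0 Tp = -1 by have := Tge h0 h0A; lra.
    by move=> ->; exact: halfG h0A x Gx.
  by have := Tge h0 h0A; lra.
split => //; split; first by exists h0.
move=> h; rewrite solE => [[_ hT]].
move: hT; rewrite dTp => hT.
have EE : 0 < dotv E E by apply: dotv_gt0.
have nE : 0 < enorm E by rewrite /enorm sqrtr_gt0.
have -> : enorm Tp = t * enorm E.
  rewrite /enorm TpE dotvNl dotvNr opprK !dotvZl !dotvZr mulrA -expr2.
  by rewrite sqrtrM ?sqr_ge0 // sqrtr_sqr ger0_norm // ltW.
rewrite [t * _]mulrC invfM mulrA divff ?gt_eqF // mul1r.
have tn : t != 0 by rewrite gt_eqF.
apply: (mulfI tn); rewrite mulfV //; lra.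
Qed.
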